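(* Consider any instance of the splittable capacitated arc routing problem (SCARP) as defined in the context, with robot index set $\mathcal{R}$, and suppose it admits an optimal solution. Then there exists an optimal solution $(x,y)$ such that $|R_{2+}(y)| < m := |\mathcal{U}|$; that is, fewer than $m$ robots spray two or more edges, and every other robot $r\in\mathcal{R}$ either sprays nothing ($S_r(y)=\emptyset$) or sprays exactly one edge ($|S_r(y)|=1$).
   Context: SCARP (basic formulation). Let $\mathcal{G}=(\mathcal{V},\mathcal{U})$ be an undirected connected graph with vertex set $\mathcal{V}=\{1,\dots,n\}$, vertex $1$ being the depot. $\mathcal{U}$ is the set of undirected edges, written as pairs $(i,j)$ with $i<j$, and $\mathcal{E}=\{(i,j),(j,i):(i,j)\in\mathcal{U}\}$ is the set of directed arcs. Each edge $(i,j)\in\mathcal{U}$ has a cost $C_{ij}\ge 0$ and a demand $D_{ij}\ge 0$; $P>0$ is the robot capacity; $\mathcal{R}$ is a finite set of robots (robot tours). Decision variables: $x^r_{ij}\in\{0,1\}$ for $(i,j)\in\mathcal{E}$, $r\in\mathcal{R}$ (robot $r$ traverses arc $(i,j)$), and $y^r_{ij}\ge 0$ for $(i,j)\in\mathcal{U}$, $r\in\mathcal{R}$ (amount sprayed by $r$ on edge $(i,j)$; $y^r_{ij}=0$ if $D_{ij}=0$). The problem is: minimize $\sum_{r\in\mathcal{R}}\sum_{(i,j)\in\mathcal{U}} C_{ij}(x^r_{ij}+x^r_{ji})$ subject to: (i) $\sum_{(i,j)\in\mathcal{U}} y^r_{ij}\le P$ for all $r$; (ii) $\sum_{r\in\mathcal{R}}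 y^r_{ij}=D_{ij}$ for all $(i,j)\in\mathcal{U}$; (iii) $y^r_{ij}\le P(x^r_{ij}+x^r_{ji})$ for all $(i,j)\in\mathcal{U}$, $r$; (iv) flow conservation $\sum_{i:(i,k)\in\mathcal{E}} x^r_{ik}=\sum_{j:(k,j)\in\mathcal{E}} x^r_{kj}$ for all $k\in\mathcal{V}$, $r$; (v) connectivity: for every $\mathcal{S}\subset\mathcal{V}$ with $1\in\mathcal{S}$, $\mathcal{T}=\mathcal{V}\setminus\mathcal{S}$, and every $r$, $\sum_{i\in\mathcal{S},j\in\mathcal{T},(i,j)\in\mathcal{E}} P\,x^r_{ij}\ge \sum_{(i,j)\in\mathcal{U},\,i,j\in\mathcal{T}} y^r_{ij}$. A solution is a pair $(x,y)$ satisfying all constraints; it is optimal if it minimizes the objective. Support: for a solution $y$ and robot $r$, $S_r(y)=\{(i,j)\in\mathcal{U}: y^r_{ij}>0\}$, and $R_{2+}(y)=\{r\in\mathcal{R}: |S_r(y)|\ge 2\}$. *)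

(* Defs.v *)
From HB Require Import structures.
From mathcomp Require Import all_boot all_order all_algebra.
From mathcomp Require Import reals.
Set Implicit Arguments. Unset Strict Implicit. Unset Printing Implicit Defensive.
Import Order.TTheory GRing.Theory Num.Theory.
Local Open Scope ring_scope.

(* An instance: vertex finType V with depot, undirected edge set U given as
   oriented pairs (one orientation per edge, no loops), robots finType Rb,
   costs C, demands D (on edges), capacity P.
   Decision variables: x : Rb -> V*V -> bool (only values on arcs in E are
   used) and y : Rb -> V*V -> R (only values on edges in U are used). *)

Section SCARP.
Variables (R : realType) (V : finType) (depot : V) (U : {set V * V})
          (Rb : finType) (C D : V * V -> R) (P : R).

Definition arcs : {set V * V} := U :|: [set (e.2, e.1) | e in U].

Definition b2R (b : bool) : R := (b : nat)%:R.

Definition objective (x : Rb -> V * V -> bool) : R :=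
  \sum_(r : Rb) \sum_(e in U) C e * (b2R (x r e) + b2R (x r (e.2, e.1))).

Definition feasible (x : Rb -> V * V -> bool) (y : Rb -> V * V -> R) : Prop :=
  (forall r e, e \in U -> 0 <= y r e) /\
  (forall r e, e \in U -> D e = 0 -> y r e = 0) /\
  (forall r, \sum_(e in U) y r e <= P) /\
  (forall e, e \in U -> \sum_(r : Rb) y r e = D e) /\
  (* (iii) spraying only on traversed edges *)
  (forall r e, e \in U -> y r e <= P * (b2R (x r e) + b2R (x r (e.2, e.1)))) /\
  (forall r (k : V),
     (\sum_(a in arcs | a.2 == k) (x r a : nat) =
      \sum_(a in arcs | a.1 == k) (x r a : nat))%N) /\
  (forall (S : {set V}) r, depot \in S ->
     \sum_(e in U | (e.1 \notin S) && (e.2 \notin S)) y r e <=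
     \sum_(a in arcs | (a.1 \in S) && (a.2 \notin S)) P * b2R (x r a)).

Definition optimal (x : Rb -> V * V -> bool) (y : Rb -> V * V -> R) : Prop :=
  feasible x y /\
  forall x' y', feasible x' y' -> objective x <= objective x'.

Definition support (y : Rb -> V * V -> R) (r : Rb) : {set V * V} :=
  [set e in U | 0 < y r e].

Definition R2plus (y : Rb -> V * V -> R) : {set Rb} :=
  [set r | (2 <= #|support y r|)%N].

End SCARP.

Definition scarp_graph (V : finType) (U : {set V * V}) : Prop :=
  (forall e, e \in U -> e.1 != e.2) /\
  (forall i j, (i, j) \in U -> (j, i) \notin U) /\
  (forall u v : V, connect (fun a b => ((a, b) \in U) || ((b, a) \in U)) u v).

(* Main.v *)
Require Import Defs.
From HB Require Import structures.
From mathcomp Require Import all_boot all_order all_algebra.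
From mathcomp Require Import reals.
From mathcomp Require Import ring lra zify.
Import Order.TTheory GRing.Theory Num.Theory.
Local Open Scope ring_scope.

Section Reduce.
Variables (R : realType) (V : finType) (U : {set V * V}) (Rb : finType).

Definition Sy (y : Rb -> V * V -> R) : {set Rb * (V * V)} :=
  [set p | (p.2 \in U) && (0 < y p.1 p.2)].

Lemma inSy y r e : ((r, e) \in Sy y) = (e \in Defs.support U y r).
Proof. by rewrite !inE. Qed.

Lemma card_Sy y : #|Sy y| = (\sum_r #|Defs.support U y r|)%N.
Proof.
rewrite -sum1_card big_mkcond /=.
rewrite (eq_bigr (fun p => if (p.1, p.2) \in Sy y then 1%N else 0%N)); last by case.
rewrite -(pair_bigA _ (fun r e => if (r, e) \in Sy y then 1%N else 0%N)) /=.
apply: eq_bigr => r _; rewrite -sum1_card [RHS]big_mkcond; apply: eq_bigr => e _.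
by rewrite inSy.
Qed.

Lemma b2R0 : b2R R false = 0. Proof. by []. Qed.
Lemma b2R1 : b2R R true = 1. Proof. by []. Qed.
Lemma b2R_ge0 b : 0 <= b2R R b. Proof. by case: b. Qed.

Lemma L1 (p : Rb * (V * V)) r : p.2 \in U ->
  \sum_(e in U) b2R R (p == (r, e)) = b2R R (p.1 == r).
Proof.
case: p => r' e' /= He.
rewrite (bigD1 e') //= big1 ?addr0; first by rewrite xpair_eqE eqxx andbT.
move=> e /andP [_ /negbTE ne]; by rewrite xpair_eqE andbC eq_sym ne.
Qed.

Lemma L2 (p : Rb * (V * V)) e :
  \sum_(r : Rb) b2R R (p == (r, e)) = b2R R (p.2 == e).
Proof.
case: p => r' e' /=.
rewrite (bigD1 r') //= big1 ?addr0; first by rewrite xpair_eqE eqxx.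
move=> r /negbTE ne; by rewrite xpair_eqE eq_sym ne.
Qed.

Lemma count_ge y : (#|[set r | (0 < #|Defs.support U y r|)%N]| + #|R2plus U y| <= #|Sy y|)%N.
Proof.
rewrite card_Sy.
have -> : #|[set r | (0 < #|Defs.support U y r|)%N]| = (\sum_r (0 < #|Defs.support U y r|) : nat)%N.
  by rewrite -sum1_card big_mkcond; apply: eq_bigr => r _; rewrite inE; case: (_ < _)%N.
have -> : #|R2plus U y| = (\sum_r (2 <= #|Defs.support U y r|) : nat)%N.
  by rewrite -sum1_card big_mkcond; apply: eq_bigr => r _; rewrite inE; case: (_ <= _)%N.
rewrite -big_split /=.
apply: leq_sum => r _; rewrite /=.
by case: #|Defs.support U y r| => [|[|k]].
Qed.

Lemma exists_z y e0 : e0 \in U -> (#|U| <= #|R2plus U y|)%N ->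
  exists z : Rb -> V * V -> R,
    [/\ forall r e, (r, e) \notin Sy y -> z r e = 0,
        exists r e, z r e != 0,
        forall r, \sum_(e in U) z r e = 0 &
        forall e, e \in U -> \sum_r z r e = 0].
Proof.
move=> e0U hk.
set S := Sy y.
set A := [set r | (0 < #|Defs.support U y r|)%N].
set Cs : {set Rb + (V * V)} := ((@inl Rb (V * V)) @: A) :|: ((@inr Rb (V * V)) @: (U :\ e0)).
have hcard : (#|Cs| < #|S|)%N.
  have h1 : (#|Cs| <= #|A| + #|U :\ e0|)%N.
    rewrite cardsU; apply: leq_trans (leq_subr _ _) _.
    by apply: leq_add; apply: leq_imset_card.
  have h2 := cardsD1 e0 U; rewrite e0U in h2.
  have h3 := count_ge y.
  rewrite /S; move: h1 h2 h3; rewrite -/A; lia.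
pose f (i : 'I_#|S|) (j : 'I_#|Cs|) :=
   (match enum_val j with inl r => b2R R ((enum_val i).1 == r)
                        | inr e => b2R R ((enum_val i).2 == e) end).
pose M : 'M[R]_(#|S|, #|Cs|) := \matrix_(i, j) f i j.
have ME : forall i j, M i j = f i j by move=> i j; rewrite /M mxE.
have Hk : kermx M != 0.
  by rewrite -mxrank_eq0 mxrank_ker subn_eq0 -ltnNge (leq_ltn_trans (rank_leq_col M) hcard).
have : ~~ [forall i, row i (kermx M) == 0].
  apply: contra Hk => /forallP H; apply/eqP/row_matrixP => i; rewrite row0; exact/eqP/H.
case/forallPn => i1 Hi1.
set u := row i1 (kermx M).
have uM : u *m M = 0 by apply/sub_kermxP/row_sub.
have : ~~ [forall i, u 0 i == 0].
  apply: contra Hi1 => /forallP H; apply/eqP/rowP => i; apply/eqP; rewrite [X in _ == X]mxE; exact: H.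
case/forallPn => i0 Hi0.
pose z r e := \sum_(i < #|S|) u 0 i * b2R R (enum_val i == (r, e)).
have z1 : forall r e, (r, e) \notin S -> z r e = 0.
  move=> r e H; apply: big1 => i _; have := enum_valP i.
  case: eqP => [-> /(negP H) //|_ _]; by rewrite mulr0.
have z3 : forall r, \sum_(e in U) z r e = 0.
  move=> r; case: (boolP (r \in A)) => rA.
    have CsI : inl r \in Cs by rewrite !inE; apply/orP; left; apply: imset_f.
    have := congr1 (fun m : 'rV[R]_#|Cs| => m 0 (enum_rank_in CsI (inl r))) uM.
    rewrite !mxE => H; apply: etrans H; rewrite /z exchange_big /=; apply: eq_bigr => i _.
    rewrite -mulr_sumr ME /f enum_rankK_in // L1 //.
    by have := enum_valP i; rewrite inE => /andP [].
  apply: big1 => e eU; apply: z1; rewrite inSy; apply/negP => H.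
  move: rA; rewrite inE => /negP; apply; apply/card_gt0P; by exists e.
have z4 : forall e, e \in U -> e != e0 -> \sum_r z r e = 0.
  move=> e eU ne.
  have CsI : inr e \in Cs by rewrite !inE; apply/orP; right; apply: imset_f; rewrite !inE ne.
  have := congr1 (fun m : 'rV[R]_#|Cs| => m 0 (enum_rank_in CsI (inr e))) uM.
  rewrite !mxE => H; apply: etrans H; rewrite /z exchange_big /=; apply: eq_bigr => i _.
  by rewrite -mulr_sumr ME /f enum_rankK_in // L2.
exists z; split => //.
- exists (enum_val i0).1, (enum_val i0).2.
  rewrite /z (bigD1 i0) //= -surjective_pairing eqxx b2R1 mulr1 big1 ?addr0 //.
  move=> i ne; rewrite (inj_eq enum_val_inj) (negbTE ne); by rewrite mulr0.
- move=> e eU; case: (eqVneq e e0) => [->|ne]; last exact: z4.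
  have : \sum_r \sum_(e in U) z r e = 0 by apply: big1 => r _; exact: z3.
  rewrite exchange_big (bigD1 e0) //= => H.
  apply: etrans H; rewrite -[LHS]addr0; congr (_ + _); symmetry; apply: big1 => e' /andP [e'U ne']; exact: z4.
Qed.


Definition rowsum (y : Rb -> V * V -> R) r := \sum_(e in U) y r e.
Definition colsum (y : Rb -> V * V -> R) e := \sum_(r : Rb) y r e.

Lemma step y e0 : e0 \in U -> (#|U| <= #|R2plus U y|)%N ->
  (forall r e, e \in U -> 0 <= y r e) ->
  exists y' : Rb -> V * V -> R,
    [/\ forall r e, e \in U -> 0 <= y' r e,
        Sy y' \proper Sy y,
        forall r, rowsum y' r = rowsum y r &
        forall e, e \in U -> colsum y' e = colsum y e].
Proof.
move=> e0U hk Hy.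
have [z [z1 [r0 [e1 z2]] z3 z4]] := @exists_z y e0 e0U hk.
set N := [set p | (p \in Sy y) && (z p.1 p.2 < 0)].
have [N0|[p1 Hp1]] := set_0Vmem N.
  exfalso.
  have zge : forall r e, e \in U -> 0 <= z r e.
    move=> r e eU; case: (boolP ((r, e) \in Sy y)) => H; last by rewrite z1.
    have : (r, e) \notin N by rewrite N0 inE.
    by rewrite inE H /= -leNgt.
  have inS : (r0, e1) \in Sy y by case: (boolP ((r0, e1) \in Sy y)) => // H; rewrite z1 ?eqxx in z2.
  have e1U : e1 \in U by move: inS; rewrite inE => /andP [].
  have := psumr_eq0P (fun e eU => zge r0 e eU) (z3 r0) e1U.
  by move/eqP; rewrite (negbTE z2).
pose F p := y p.1 p.2 / - z p.1 p.2.
case: (@arg_minP _ _ _ p1 (fun p => p \in N) F Hp1) => ps Hps Hmin.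
set t := F ps.
have [psS zps] : ps \in Sy y /\ z ps.1 ps.2 < 0 by move: Hps; rewrite inE => /andP.
have yps : 0 < y ps.1 ps.2 by move: psS; rewrite inE => /andP [].
have t0 : 0 <= t by rewrite /t /F divr_ge0 // ?ltW // oppr_gt0.
pose y' r e := y r e + t * z r e.
exists y'; split.
- move=> r e eU; rewrite /y'.
  case: (boolP ((r, e) \in Sy y)) => H; last by rewrite z1 // mulr0 addr0 Hy.
  have yre : 0 < y r e by move: H; rewrite inE => /andP [].
  have [zl|zg] := ltP (z r e) 0; last by apply: addr_ge0; [exact: ltW | exact: mulr_ge0].
  have := Hmin (r, e); rewrite inE H zl => /(_ isT) /=.
  rewrite /F ler_pdivlMr ?oppr_gt0 // => Ht.
  have Ht' : t * - z r e <= y r e by exact: Ht.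
  lra.
- apply/properP; split.
    apply/subsetP => -[r e]; apply: contraTT => H.
    by rewrite !inE /y' z1 // mulr0 addr0; rewrite inE in H.
  exists ps => //; rewrite inE /y' negb_and; apply/orP; right.
  have -> : y ps.1 ps.2 + t * z ps.1 ps.2 = 0.
    rewrite /t /F; field; by rewrite lt_eqF.
  by rewrite ltxx.
- move=> r; rewrite /rowsum /y' big_split /= -mulr_sumr z3 mulr0 addr0 //.
- move=> e eU; rewrite /colsum /y' big_split /= -mulr_sumr z4 // mulr0 addr0 //.
Qed.

Lemma reduce e0 : e0 \in U -> forall n y, (#|Sy y| <= n)%N ->
  (forall r e, e \in U -> 0 <= y r e) ->
  exists y' : Rb -> V * V -> R,
    [/\ forall r e, e \in U -> 0 <= y' r e,
        Sy y' \subset Sy y,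
        forall r, rowsum y' r = rowsum y r,
        forall e, e \in U -> colsum y' e = colsum y e &
        (#|R2plus U y'| < #|U|)%N].
Proof.
move=> e0U; elim=> [|n IH] y Hn Hy.
  case: (ltnP #|R2plus U y| #|U|) => hk; first by exists y; split.
  have [y' [_ Hp _ _]] := @step y e0 e0U hk Hy.
  by have := proper_card Hp; rewrite ltnNge (leq_trans Hn).
case: (ltnP #|R2plus U y| #|U|) => hk; first by exists y; split.
have [y' [Hy' Hp Hr Hc]] := @step y e0 e0U hk Hy.
have Hn' : (#|Sy y'| <= n)%N by have := proper_card Hp; move: Hn; lia.
have [y'' [H1 H2 H3 H4 H5]] := IH y' Hn' Hy'.
exists y''; split => //.
- exact: subset_trans H2 (proper_sub Hp).
- by move=> r; rewrite H3 Hr.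
- by move=> e eU; rewrite H4 // Hc.
Qed.

End Reduce.

Theorem theorem1 (R : realType) (V : finType) (depot : V) (U : {set V * V})
    (Rb : finType) (C D : V * V -> R) (P : R) :
  scarp_graph U ->
  (0 < #|U|)%N ->
  (forall e, e \in U -> 0 <= C e) ->
  (forall e, e \in U -> 0 <= D e) ->
  0 < P ->
  (exists (x : Rb -> V * V -> bool) (y : Rb -> V * V -> R), optimal depot U C D P x y) ->
  exists (x : Rb -> V * V -> bool) (y : Rb -> V * V -> R), optimal depot U C D P x y /\ (#|R2plus U y| < #|U|)%N.
Proof.
move=> _ /card_gt0P [e0 e0U] _ _ P0 [x [y [[Hy0 [HD [Hcap [Hdem [Hiii [Hflow Hcut]]]]]] Hopt]]].
have [y' [Hy' Hsub Hr Hc Hk]] := @reduce R V U Rb e0 e0U _ y (leqnn _) Hy0.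
have supp : forall r e, e \in U -> 0 < y' r e -> 0 < y r e.
  move=> r e eU H.
  have : (r, e) \in Sy R V U Rb y by apply: (subsetP Hsub); rewrite inE /= eU H.
  by rewrite inE => /andP [].
have yz : forall r e, e \in U -> y r e = 0 -> y' r e = 0.
  move=> r e eU H0; apply/eqP; rewrite eq_le Hy' // andbT leNgt.
  by apply/negP => /(supp _ _ eU); rewrite H0 ltxx.
have ysum : forall r, \sum_(e in U) y' r e <= P.
  by move=> r; have := Hr r; rewrite /rowsum => ->.
have ycap : forall r e, e \in U -> y' r e <= P.
  move=> r e eU; apply: le_trans (ysum r).
  rewrite (bigD1 e) //= lerDl; apply: sumr_ge0 => e' /andP [e'U _]; exact: Hy'.
exists x, y'; split; last exact: Hk.
split; last exact: Hopt.
split; first exact: Hy'.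
split; first by move=> r e eU De; apply: yz => //; exact: HD.
split; first exact: ysum.
split; first by move=> e eU; have := Hc e eU; rewrite /colsum => ->; exact: Hdem.
split.
  move=> r e eU; have [H|H] := leP (y' r e) 0.
    apply: le_trans H _; apply: mulr_ge0; first exact: ltW.
    by apply: addr_ge0; apply: b2R_ge0.
  have := supp r e eU H; have := Hiii r e eU; have := ycap r e eU.
  case: (x r e); case: (x r (e.2, e.1)); rewrite /b2R /=; lra.
split; first exact: Hflow.
move=> S r HS.
set Q := fun a : V * V => (a.1 \in S) && (a.2 \notin S).
have [ex|nex] := boolP [exists a, [&& a \in arcs U, Q a & x r a]].
  case/existsP: ex => a /and3P [aA aQ xa].
  apply: (@le_trans _ _ (\sum_(e in U) y' r e)).
    rewrite [X in _ <= X](bigID (fun e => (e.1 \notin S) && (e.2 \notin S))) /= lerDl.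
    by apply: sumr_ge0 => e /andP [eU _]; exact: Hy'.
  apply: le_trans (ysum r) _.
  apply: (@le_trans _ _ (P * b2R R (x r a))); first by rewrite xa b2R1 mulr1.
  rewrite (bigD1 a) /=; last by rewrite aA.
  rewrite lerDl; apply: sumr_ge0 => a' _; apply: mulr_ge0; [exact: ltW | exact: b2R_ge0].
have R0 : \sum_(a in arcs U | Q a) P * b2R R (x r a) = 0.
  apply: big1 => a /andP [aA aQ].
  have : x r a = false.
    apply/negP => xa; move/negP: nex; apply; apply/existsP; exists a; by rewrite aA aQ xa.
  by move=> ->; rewrite b2R0 mulr0.
have := Hcut S r HS; rewrite -/Q R0 => Hle.
have Hy0s : forall e, (e \in U) && ((e.1 \notin S) && (e.2 \notin S)) -> y r e = 0.
  apply: psumr_eq0P.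
    by move=> e /andP [eU _]; apply: Hy0.
  by apply/eqP; rewrite eq_le Hle sumr_ge0 // => e /andP [eU _]; apply: Hy0.
rewrite [X in X <= _]big1.
  by [].
move=> e /and3P [eU h1 h2]; apply: yz => //.
by apply: Hy0s; rewrite eU h1 h2.
Qed.
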